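(* Let $H$ be an Abelian group, $X$ a simplicial set, $Z\subset X$ a simplicial subset with inclusion $i$, $j:X\to X/Z$ the quotient. Let $\alpha:X_2\to H$ be a normalized 2-cocycle such that $i^*\alpha$ is a coboundary, and let $\nu:Z_1\to H$ be a normalized 1-cochain with $\partial\nu=i^*\alpha$. Let $\tilde\nu:X_1\to H$ be $\nu$ on $Z_1$ and $0$ elsewhere, and let $\beta:(X/Z)_2\to H$ be a normalized 2-cocycle with $j^*\beta=\alpha-\partial\tilde\nu$. Let $\mathrm{sDist}_\beta(X/Z)$ be the set of distributions on the twisted product over $X/Z$ determined by $\beta$, and $\mathrm{sDist}_\alpha(X,\nu)$ the set of distributions $p$ on the twisted product over $X$ determined by $\alpha$ whose restriction to $Z$ equals $\delta^{\varphi_\nu}$. Then there is a convex isomorphism \[ \mathrm{sDist}_\beta(X/Z)\cong \mathrm{sDist}_\alpha(X,\nu). \]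
   Context: Distributions take values in $\mathbb{R}_{\ge0}$: $D(S)$ = finitely supported probability distributions on $S$, extended levelwise to simplicial sets; a distribution on a simplicial map $\pi:E\to Y$ is a simplicial map $p:Y\to D(E)$ with $D(\pi)\circ p=\delta$. $N(H)$ is the nerve of $H$ ($N(H)_n=H^n$, $d_0$ drops first entry, $d_n$ last, inner $d_i$ add adjacent entries, $s_j$ inserts $0$). A normalized $n$-cochain is a map $Y_n\to H$ vanishing on degenerate simplices; $\partial$ is the coboundary, e.g. $\partial\nu(x)=\nu(d_0x)-\nu(d_1x)+\nu(d_2x)$; $i^*,j^*$ are precomposition. A normalized 2-cocycle $\gamma$ on $Y$ determines the twisting function $\eta_1=0,\eta_2=\gamma$, $\eta_n(y)=(\gamma(d_3\cdots d_ny),\eta_{n-1}(d_1y)-\eta_{n-1}(d_0y))$, and the twisted product $N(H)\times_\eta Y$ with simplices $H^n\times Y_n$, $d_0(g,y)=(d_0g+\eta_n(y),d_0y)$ and other structure maps componentwise; $\pi_\eta$ is the projection. The restriction of $p$ to $Z$ is $p\circ i$, a distribution on the restricted bundle over $Z$ (twisted by $i^*\alpha$). A section of $\pi_\eta$ is a simplicial map $s$ with $\pi_\eta s=\mathrm{id}$; $\varphi_\nu$ denotes the unique section of the restricted bundle over $Z$ whose $H$-component on $1$-simplices is $\nu$ (in degrees $0,1,2$: $z\mapsto(0,z)$, $(\nu(z),z)$, $((\nu(d_2z),\nu(d_1z)-\nu(d_2z)),z)$), and $\delta^{\varphi_\nu}=\delta\circ\varphi_\nu$. *)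

(* Defs.v *)
From HB Require Import structures.
From mathcomp Require Import all_boot all_order all_algebra.
From mathcomp Require Import boolp classical_sets functions cardinality fsbigop reals.
Set Implicit Arguments. Unset Strict Implicit. Unset Printing Implicit Defensive.
Import Order.TTheory GRing.Theory Num.Theory.
Local Open Scope classical_set_scope.
Local Open Scope ring_scope.

(* Raw simplicial data: levels X_n, faces d_i : X_{n+1} -> X_n (i <= n+1),
   degeneracies s_j : X_n -> X_{n+1} (j <= n).  Indices are natural numbers;
   only in-range indices are ever used.                                  *)
Record ssdata := SSData {
  lev :> nat -> choiceType;
  face : forall n, nat -> lev n.+1 -> lev n;
  degen : forall n, nat -> lev n -> lev n.+1 }.

Definition is_sSet (X : ssdata) : Prop :=
  [/\ (forall n i j (x : X n.+2), (i < j)%N -> (j <= n.+2)%N ->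
         face i (face j x) = face j.-1 (face i x)),
      (forall n i j (x : X n), (i <= j)%N -> (j <= n)%N ->
         degen i (degen j x) = degen j.+1 (degen i x)),
      (forall n i j (x : X n.+1), (i < j)%N -> (j <= n.+1)%N ->
         face i (degen j x) = degen j.-1 (face i x)),
      (forall n j (x : X n), (j <= n)%N ->
         face j (degen j x) = x /\ face j.+1 (degen j x) = x) &
      (forall n i j (x : X n.+1), (j.+1 < i)%N -> (i <= n.+2)%N ->
         face i (degen j x) = degen j (face i.-1 x))].

Definition is_subcomplex (X : ssdata) (Z : forall n, pred (X n)) : Prop :=
  (forall n i (x : X n.+1), (i <= n.+1)%N -> x \in Z n.+1 -> face i x \in Z n) /\
  (forall n j (x : X n), (j <= n)%N -> x \in Z n -> degen j x \in Z n.+1).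

(* The quotient X/Z: in degree n, the simplices of X_n not in Z_n, plus a
   base point (None) to which all of Z is collapsed. *)
Definition qlev (X : ssdata) (Z : forall n, pred (X n)) (n : nat) : choiceType :=
  option {x : X n | x \notin Z n}.

Definition quot (X : ssdata) (Z : forall n, pred (X n)) : ssdata :=
  @SSData (qlev Z)
    (fun n i o => obind (fun x => insub (face i (val x))) o)
    (fun n j o => obind (fun x => insub (degen j (val x))) o).

Definition qproj (X : ssdata) (Z : forall n, pred (X n)) n (x : X n) : quot Z n :=
  insub x.

Section Cochains.
Variables (H : zmodType) (Y : ssdata).

Definition normalized n (f : Y n.+1 -> H) : Prop :=
  forall j (y : Y n), (j <= n)%N -> f (degen j y) = 0.

Definition cobound n (f : Y n -> H) (x : Y n.+1) : H :=
  \sum_(i < n.+2) (if odd i then - f (face i x) else f (face i x)).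

Definition cocycle n (f : Y n -> H) : Prop := forall x, cobound f x = 0.
End Cochains.

(* The nerve N(H): N(H)_n = H^n, represented as {ffun 'I_n -> H}. *)
Section Nerve.
Variable H : zmodType.

Definition gat n (g : {ffun 'I_n -> H}) (k : nat) : H :=
  if insub k is Some i then g i else 0.

(* d_i : H^{n+1} -> H^n: d_0 drops the first entry, d_{n+1} the last,
   inner d_i adds the adjacent entries i, i+1 (1-based). *)
Definition nface n (i : nat) (g : {ffun 'I_n.+1 -> H}) : {ffun 'I_n -> H} :=
  [ffun k : 'I_n => if (k.+1 < i)%N then gat g k
                    else if k.+1 == i then gat g k + gat g k.+1
                    else gat g k.+1].

(* s_j : H^n -> H^{n+1} inserts 0 at position j (0-based). *)
Definition ndegen n (j : nat) (g : {ffun 'I_n -> H}) : {ffun 'I_n.+1 -> H} :=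
  [ffun k : 'I_n.+1 => if (k < j)%N then gat g k
                       else if k == j :> nat then 0 else gat g k.-1].
End Nerve.

Section Twisted.
Variables (H : zmodType) (Y : ssdata) (gamma : Y 2%N -> H).

(* front 2-face d_3 ... d_{n+2} : Y_{n+2} -> Y_2 *)
Fixpoint front2 (n : nat) : Y n.+2 -> Y 2%N :=
  match n return Y n.+2 -> Y 2%N with
  | 0 => fun y => y
  | m.+1 => fun y => @front2 m (face m.+3 y)
  end.

(* eta n = eta_{n+1} : Y_{n+1} -> H^n *)
Fixpoint eta (n : nat) : Y n.+1 -> {ffun 'I_n -> H} :=
  match n return Y n.+1 -> {ffun 'I_n -> H} with
  | 0 => fun _ => [ffun _ => 0]
  | S n1 =>
    match n1 return (Y n1.+1 -> {ffun 'I_n1 -> H}) -> Y n1.+2 -> {ffun 'I_n1.+1 -> H} with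
    | 0 => fun _ y => [ffun _ => gamma y]
    | S m => fun rec y =>
      [ffun k : 'I_m.+2 =>
         if k == 0%N :> nat then gamma (@front2 m.+1 y)
         else gat (rec (face 1%N y) - rec (face 0%N y)) k.-1]
    end (@eta n1)
  end.

Definition tlev (n : nat) : choiceType :=
  ({ffun 'I_n -> H} * Y n)%type.

Definition tface n (i : nat) (e : tlev n.+1) : tlev n :=
  (if i == 0%N then nface 0%N e.1 + eta e.2 else nface i e.1, face i e.2).

Definition tdegen n (j : nat) (e : tlev n) : tlev n.+1 :=
  (ndegen j e.1, degen j e.2).

Definition twisted : ssdata := @SSData tlev tface tdegen.

Definition tproj n (e : twisted n) : Y n := e.2.
End Twisted.

Section Distr.
Variable R : realType.

Definition is_distr (S : choiceType) (p : S -> R) : Prop :=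
  [/\ forall s, 0 <= p s,
      finite_set (p @^-1` [set~ 0]) &
      \sum_(s \in [set: S]) p s = 1].

Definition dirac (S : choiceType) (a : S) : S -> R :=
  fun s => if s == a then 1 else 0.

Definition push (S T : choiceType) (f : S -> T) (p : S -> R) : T -> R :=
  fun t => \sum_(s \in f @^-1` [set t]) p s.

(* A levelwise family Y -> D(E) *)
Definition dfam (E : ssdata) (Y : ssdata) := forall n, Y n -> E n -> R.

Definition is_distr_on (E Y : ssdata) (pi : forall n, E n -> Y n)
  (p : dfam E Y) : Prop :=
  [/\ forall n y, is_distr (p n y),
      forall n i (y : Y n.+1), (i <= n.+1)%N ->
        push (@face E n i) (p n.+1 y) = p n (face i y),
      forall n j (y : Y n), (j <= n)%N ->
        push (@degen E n j) (p n y) = p n.+1 (degen j y) &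
      forall n (y : Y n), push (pi n) (p n y) = dirac y].

Definition dmix (E Y : ssdata) (t : R) (p q : dfam E Y) : dfam E Y :=
  fun n y e => t * p n y e + (1 - t) * q n y e.

Definition convex_iso (E1 Y1 E2 Y2 : ssdata)
  (S1 : dfam E1 Y1 -> Prop) (S2 : dfam E2 Y2 -> Prop) : Prop :=
  exists (F : dfam E1 Y1 -> dfam E2 Y2) (G : dfam E2 Y2 -> dfam E1 Y1),
  [/\ forall p, S1 p -> S2 (F p),
      forall q, S2 q -> S1 (G q),
      forall p, S1 p -> G (F p) = p,
      forall q, S2 q -> F (G q) = q &
      forall t p p', 0 <= t <= 1 -> S1 p -> S1 p' ->
        F (dmix t p p') = dmix t (F p) (F p')].
End Distr.

Section SDist.
Variables (R : realType) (H : zmodType).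

Definition sDist (Y : ssdata) (beta : Y 2%N -> H)
  (p : dfam R (twisted beta) Y) : Prop :=
  is_distr_on (R:=R) (@tproj H Y beta) p.

Definition is_Zsection (X : ssdata) (alpha : X 2%N -> H)
  (Z : forall n, pred (X n)) (sigma : forall n, X n -> {ffun 'I_n -> H}) : Prop :=
  (forall n i (z : X n.+1), (i <= n.+1)%N -> z \in Z n.+1 ->
     @face (twisted alpha) n i (sigma n.+1 z, z) = (sigma n (face i z), face i z)) /\
  (forall n j (z : X n), (j <= n)%N -> z \in Z n ->
     @degen (twisted alpha) n j (sigma n z, z) = (sigma n.+1 (degen j z), degen j z)).

(* phi_nu is the (unique) Z-section with H-component nu on 1-simplices;
   restriction of p to Z equals delta o phi_nu *)
Definition restr_is_phi (X : ssdata) (alpha : X 2%N -> H)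
  (Z : forall n, pred (X n)) (nu : X 1%N -> H) (p : dfam R (twisted alpha) X) : Prop :=
  forall sigma, is_Zsection alpha Z sigma ->
    (forall z : X 1%N, z \in Z 1%N -> sigma 1%N z = [ffun _ => nu z]) ->
    forall n (z : X n), z \in Z n -> p n z = dirac R (sigma n z, z).

Definition sDist_rel (X : ssdata) (alpha : X 2%N -> H)
  (Z : forall n, pred (X n)) (nu : X 1%N -> H) (p : dfam R (twisted alpha) X) : Prop :=
  @sDist X alpha p /\ @restr_is_phi X alpha Z nu p.
End SDist.

Definition nutilde (H : zmodType) (X : ssdata) (Z : forall n, pred (X n))
  (nu : X 1%N -> H) (x : X 1%N) : H := if x \in Z 1%N then nu x else 0.

(* Main.v *)
Require Import Defs.
From HB Require Import structures.
From mathcomp Require Import all_boot all_order all_algebra.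
From mathcomp Require Import boolp classical_sets functions cardinality fsbigop reals.
Import Order.TTheory GRing.Theory Num.Theory.
Local Open Scope classical_set_scope.
Local Open Scope ring_scope.

From mathcomp Require Import zify.

Lemma alg1 (H : zmodType) (a b c d : H) : (b - a) + (c - d - b + a) = c - d.
Proof. by rewrite addrC addrA (addrAC (c-d-b)) subrK addrK. Qed.
Lemma alg2 (H : zmodType) (A c d e f : H) : (A - c + d) - (A - e + f) = e - f - c + d.
Proof.
rewrite opprD opprB (addrC e) -addrA [d + _]addrA addrCA !addrA.
by rewrite (addrAC (d - A)) subrK [RHS]addrC !addrA (addrAC (d+e)).
Qed.

Section Gen.
Variable H : zmodType.
Lemma gatE n (g : {ffun 'I_n -> H}) (k : 'I_n) : gat g k = g k.
Proof. by rewrite /gat valK. Qed.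
Lemma gatO n (g : {ffun 'I_n -> H}) k (h : (k < n)%N) : gat g k = g (Ordinal h).
Proof. by rewrite /gat insubT. Qed.
Lemma gat_out n (g : {ffun 'I_n -> H}) k : (n <= k)%N -> gat g k = 0.
Proof. by move=> h; rewrite /gat insubF // ltnNge h. Qed.
Lemma gatB n (g g' : {ffun 'I_n -> H}) k : gat (g - g') k = gat g k - gat g' k.
Proof.
case: (ltnP k n) => h; last by rewrite !gat_out // subr0.
by rewrite !(gatO _ _ _ h) !ffunE.
Qed.
Lemma gatD n (g g' : {ffun 'I_n -> H}) k : gat (g + g') k = gat g k + gat g' k.
Proof.
case: (ltnP k n) => h; last by rewrite !gat_out // addr0.
by rewrite !(gatO _ _ _ h) !ffunE.
Qed.
Lemma gat0 n k : gat (0 : {ffun 'I_n -> H}) k = 0.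
Proof.
case: (ltnP k n) => h; last by rewrite !gat_out.
by rewrite !(gatO _ _ _ h) !ffunE.
Qed.
Lemma ffun0_eq (f g : {ffun 'I_0 -> H}) : f = g.
Proof. by apply/ffunP => -[]. Qed.

Lemma nfaceB n i (g g' : {ffun 'I_n.+1 -> H}) : nface i (g - g') = nface i g - nface i g'.
Proof. by apply/ffunP => k; rewrite !ffunE !gatB; case: ifP => _; [|case: ifP => _]; rewrite // opprD addrACA. Qed.
Lemma ndegenB n j (g g' : {ffun 'I_n -> H}) : ndegen j (g - g') = ndegen j g - ndegen j g'.
Proof. by apply/ffunP => k; rewrite !ffunE !gatB; case: ifP => _; [|case: ifP => _]; rewrite // subr0. Qed.
Lemma nface0 n i : nface i (0 : {ffun 'I_n.+1 -> H}) = 0.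
Proof. by apply/ffunP => k; rewrite !ffunE !gat0; case: ifP => _; [|case: ifP => _]; rewrite // addr0. Qed.
Lemma ndegen0 n j : ndegen j (0 : {ffun 'I_n -> H}) = 0.
Proof. by apply/ffunP => k; rewrite !ffunE !gat0; case: ifP => _; [|case: ifP => _]. Qed.

Variable Y : ssdata.
Lemma eta_1 (gam : Y 2%N -> H) (y : Y 2%N) : Defs.eta gam (n:=1%N) y = [ffun _ => gam y].
Proof. by []. Qed.
Lemma eta_SS (gam : Y 2%N -> H) m (y : Y m.+3) : Defs.eta gam (n:=m.+2) y =
  [ffun k : 'I_m.+2 => if k == 0%N :> nat then gam (front2 y)
     else gat (Defs.eta gam (face 1 y) - Defs.eta gam (face 0 y)) k.-1].
Proof. by []. Qed.

Lemma etaB (g1 g2 : Y 2%N -> H) n (y : Y n.+1) :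
  Defs.eta (fun z => g1 z - g2 z) y = Defs.eta g1 y - Defs.eta g2 y.
Proof.
elim: n y => [|n IH] y; first exact: ffun0_eq.
case: n IH y => [|m] IH y; first by apply/ffunP => k; rewrite !ffunE.
apply/ffunP => k; rewrite !eta_SS !ffunE; case: ifP => // _.
rewrite !gatB !IH !gatB.
by rewrite !opprB addrACA [RHS]addrACA [X in _ + X = _]addrC.
Qed.
End Gen.
Arguments gatO {H n} g {k} h.
Arguments gatE {H n}.
Arguments ffun0_eq {H}.

Section Comb.
Variables (H : zmodType) (X : ssdata) (Z : forall n, pred (X n)).
Hypothesis hX : is_sSet X.
Hypothesis hZ : is_subcomplex Z.
Variable nu : X 1%N -> H.
Hypothesis nu0 : forall z : X 0%N, z \in Z 0%N -> nu (@degen X 0%N 0 z) = 0.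

Let nt := nutilde Z nu.

Fixpoint W (n : nat) : X n -> nat -> nat -> H :=
  match n return X n -> nat -> nat -> H with
  | 0 => fun _ _ _ => 0
  | S n1 =>
    match n1 return (X n1 -> nat -> nat -> H) -> X n1.+1 -> nat -> nat -> H with
    | 0 => fun _ y a b => if (a == 0%N) && (b == 1%N) then nt y else 0
    | S p => fun rec y a b =>
       if (a < b <= p.+2)%N then
         (if (b < p.+2)%N then rec (face p.+2 y) a b
          else if a == 0%N then rec (face 1 y) 0 p.+1
          else rec (face 0 y) a.-1 p.+1)
       else 0
    end (@W n1)
  end.
Arguments W {n}.

Lemma W_SS p (y : X p.+2) a b : W y a b =
  if (a < b <= p.+2)%N then
         (if (b < p.+2)%N then W (face p.+2 y) a b
          else if a == 0%N then W (face 1 y) 0 p.+1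
          else W (face 0 y) a.-1 p.+1)
       else 0.
Proof. by []. Qed.

Lemma W_1 (y : X 1%N) a b : W y a b = if (a == 0%N) && (b == 1%N) then nt y else 0.
Proof. by []. Qed.

Lemma W_guard n (y : X n) a b : ~~ (a < b <= n)%N -> W y a b = 0.
Proof.
case: n y => [//|[|p]] y g; first by rewrite W_1; case: ifP g => // /andP[/eqP-> /eqP->].
by rewrite W_SS (negbTE g).
Qed.

Lemma nt_degen (y : X 0%N) : nt (degen 0 y) = 0.
Proof.
rewrite /nt /nutilde; case: ifP => // h; apply: nu0.
case: hZ => hf _; have := hf 0%N 0%N (degen 0 y) isT h.
by case: hX => _ _ _ h4 _; rewrite (proj1 (h4 0%N 0%N y isT)).
Qed.


Lemma bump_lt i a : (a < i)%N -> bump i a = a.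
Proof. by rewrite /bump => h; rewrite leqNgt h. Qed.
Lemma bump_ge i a : (i <= a)%N -> bump i a = a.+1.
Proof. by rewrite /bump => ->; rewrite add1n. Qed.
Arguments bump_ge {i a}. Arguments bump_lt {i a}.

Lemma bump_guard i a b m : (i <= m.+1)%N ->
  (bump i a < bump i b <= m.+1)%N = (a < b <= m)%N.
Proof.
move=> hi; case: (leqP i a) => ha; [rewrite (bump_ge ha)|rewrite (bump_lt ha)];
case: (leqP i b) => hb; [rewrite (bump_ge hb)|rewrite (bump_lt hb)|rewrite (bump_ge hb)|rewrite (bump_lt hb)];
apply/idP/idP; lia.
Qed.

Lemma W_face n (y : X n.+1) i a b : (i <= n.+1)%N ->
  W (face i y) a b = W y (bump i a) (bump i b).
Proof.
case: hX => hff _ _ _ _.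
elim: n y i a b => [|n IH] y i a b hi.
  rewrite [LHS]/= W_1; case: ifP => // /andP[/eqP ha /eqP hb]; exfalso.
  move: ha hb; case: (leqP i a) => h1; [rewrite (bump_ge h1)|rewrite (bump_lt h1)];
  case: (leqP i b) => h2; [rewrite (bump_ge h2)|rewrite (bump_lt h2)|rewrite (bump_ge h2)|rewrite (bump_lt h2)]; lia.
case g: (a < b <= n.+1)%N; last first.
  by rewrite !W_guard // ?bump_guard // g.
case: n IH y hi g => [|p] IH y hi g.
  have [-> ->] : a = 0%N /\ b = 1%N by lia.
  rewrite W_1 /=.
  by case: i hi => [|[|[|//]]] _.
rewrite [RHS]W_SS bump_guard // g.
have [-> | hip] := eqVneq i p.+3.
  rewrite bump_lt; last by lia.
  rewrite bump_lt; last by lia.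
  by have -> : (b < p.+3)%N by lia.
have hi' : (i < p.+3)%N by rewrite ltn_neqAle hip hi.
have -> : bump i b = if (b < p.+2)%N then bump i b else p.+3.
  by case: ifP => // hb; rewrite bump_ge; lia.
rewrite [LHS]W_SS g.
case: ifP => hb.
  have -> : (bump i b < p.+3)%N.
    by case: (leqP i b) => h2; [rewrite (bump_ge h2)|rewrite (bump_lt h2)]; lia.
  rewrite -IH; last by lia.
  by rewrite [in RHS]hff //; lia.
rewrite ltnn.
have hb2 : b = p.+2 by lia.
case: (eqVneq a 0%N) => [-> | ha].
  case: (eqVneq i 0%N) => [-> | hi0].
    rewrite (bump_ge (leqnn 0)).
    have -> : (1 == 0)%N = false by [].
    have -> : (1%N).-1 = 0%N by [].
    rewrite [RHS]W_SS.
    have -> : (0 < p.+2 <= p.+2)%N by lia.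
    by rewrite ltnn eqxx.
  rewrite bump_lt; last by lia.
  rewrite eqxx.
  case: (eqVneq i 1%N) => [-> | hi1].
    rewrite [RHS]W_SS.
    have -> : (0 < p.+2 <= p.+2)%N by lia.
    by rewrite ltnn eqxx.
  rewrite hff; [|lia|lia].
  rewrite IH; last by lia.
  rewrite bump_lt; last by lia.
  by rewrite bump_ge; last by lia.
have -> : (bump i a == 0%N) = false.
  by case: (leqP i a) => h1; [rewrite (bump_ge h1)|rewrite (bump_lt h1)]; apply/negbTE; lia.

case: (eqVneq i 0%N) => [-> | hi0].
  rewrite (bump_ge (leq0n a)) [RHS]W_SS.
  have -> : (a.+1.-1 < p.+2 <= p.+2)%N by lia.
  rewrite ltnn.
  have -> : (a.+1.-1 == 0%N) = false by apply/negbTE.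
  by rewrite -(hff _ 0%N 1%N).
rewrite hff; [|lia|lia].
rewrite IH; last by lia.
rewrite (@bump_ge i.-1 p.+1); last by lia.
have -> : bump i.-1 a.-1 = (bump i a).-1.
  case: (leqP i a) => h1; [rewrite (bump_ge h1)|rewrite (bump_lt h1)].
    by rewrite bump_ge; lia.
  by rewrite bump_lt; lia.
done.
Qed.


Lemma W_last n (y : X n.+1) a b : (b <= n)%N -> W (face n.+1 y) a b = W y a b.
Proof.
move=> hb; case: (ltnP a b) => hab.
  by rewrite W_face // !bump_lt //; lia.
by rewrite !W_guard //; apply/negP; lia.
Qed.

Lemma unbump_le j b : (b <= j)%N -> unbump j b = b.
Proof. by rewrite /unbump => h; rewrite ltnNge h subn0. Qed.
Lemma unbump_gt j b : (j < b)%N -> unbump j b = b.-1.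
Proof. by rewrite /unbump => ->; rewrite subn1. Qed.
Arguments unbump_le {j b}. Arguments unbump_gt {j b}.

Lemma W_degen0 n (y : X n) j b : (j <= n)%N ->
  W (degen j y) 0 b = W y 0 (unbump j b).
Proof.
case: hX => _ _ h3 h4 h5.
elim: n y j b => [|n IH] y j b hj.
  have -> : j = 0%N by lia.
  by rewrite W_1 nt_degen; case: ifP.
case g: (0 < b <= n.+2)%N; last first.
  rewrite !W_guard ?g //; apply/negP.
  case: (leqP b j) => h; [rewrite (unbump_le h)|rewrite (unbump_gt h)]; lia.
rewrite W_SS g.
case: ifP => hb.
  case: (leqP j n) => hjn.
    rewrite h5; [|lia|lia].
    rewrite IH //= W_last //.
    case: (leqP b j) => h; [rewrite (unbump_le h)|rewrite (unbump_gt h)]; lia.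
  have -> : j = n.+1 by lia.
  rewrite (proj2 (h4 _ _ _ (leqnn _))).
  by rewrite unbump_le //; lia.
have -> : b = n.+2 by lia.
rewrite (@unbump_gt j n.+2); last by lia.
case: (eqVneq j 0%N) => [-> | hj0].
  by rewrite (proj2 (h4 _ _ _ (leq0n _))).
case: (eqVneq j 1%N) => [-> | hj1].
  by rewrite (proj1 (h4 _ 1%N _ (ltn0Sn n))).
rewrite h3; [|lia|lia].
rewrite IH; last by lia.
rewrite unbump_gt; last by lia.
case: n IH y hj hb g hj0 hj1 => [|m] IH y hj hb g hj0 hj1; first by lia.
rewrite [RHS]W_SS.
have -> : (0 < m.+2 <= m.+2)%N by lia.
by rewrite ltnn eqxx.
Qed.


Definition tau n (x : X n) : {ffun 'I_n -> H} := [ffun k : 'I_n => W x 0 k.+1 - W x 0 k].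
Arguments tau {n}.

Lemma gat_tau n (x : X n) k : (k < n)%N -> gat (tau x) k = W x 0 k.+1 - W x 0 k.
Proof. by move=> h; rewrite (gatO _ h) ffunE. Qed.

Lemma tau_face n (x : X n.+1) i : (0 < i <= n.+1)%N -> tau (face i x) = nface i (tau x).
Proof.
move=> /andP[i0 hi]; apply/ffunP => k; rewrite !ffunE !W_face // (@bump_lt i 0) //.
have hk := ltn_ord k.
case: ifP => h1.
  rewrite gat_tau; last lia.
  by rewrite (@bump_lt i k.+1) 1?(@bump_lt i k) //; lia.
case: ifP => h2.
  rewrite !gat_tau; [|lia|lia].
  rewrite (@bump_lt i k); last by lia.
  rewrite (@bump_ge i k.+1); last by lia.
  by rewrite [RHS]addrC addrA subrK.
move/negbT: h1 => h1; move/negbT: h2 => h2.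
rewrite gat_tau; last by lia.
by rewrite (@bump_ge i k.+1) 1?(@bump_ge i k) //; lia.
Qed.

Lemma tau_degen n (x : X n) j : (j <= n)%N -> tau (degen j x) = ndegen j (tau x).
Proof.
move=> hj; apply/ffunP => k; rewrite !ffunE !W_degen0 //.
have hk := ltn_ord k.
case: ifP => h1.
  rewrite gat_tau; last by lia.
  by rewrite (@unbump_le j k.+1) 1?(@unbump_le j k) //; lia.
move/negbT: h1 => h1.
case: ifP => h2.
  by rewrite (@unbump_gt j k.+1) 1?(@unbump_le j k) ?subrr //; lia.
move/negbT: h2 => h2.
rewrite gat_tau; last by lia.
rewrite (@unbump_gt j k.+1) 1?(@unbump_gt j k) //; try lia.
by have -> : k.-1.+1 = k by lia.
Qed.

Lemma tau1 (x : X 1%N) : tau x = [ffun => nt x].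
Proof. by apply/ffunP => k; rewrite !ffunE !W_1 /=; case: k => -[|//] /= _; rewrite subr0. Qed.

Lemma W_front2 n (y : X n.+2) a b : (b <= 2)%N -> W (front2 y) a b = W y a b.
Proof.
move=> hb; elim: n y => [//|n IH] y.
by rewrite [front2 _]/= IH W_last //; lia.
Qed.

Lemma cob2 (y : X 2%N) : @cobound H X 1%N nt y = W y 1%N 2%N - W y 1%N 1%N - W y 0%N 2%N + W y 0%N 1%N.
Proof. by rewrite /cobound !big_ord_recl big_ord0 /= subr0 addr0 addrA. Qed.

Lemma eta_cob n (x : X n.+1) (k : 'I_n) :
  Defs.eta (@cobound H X 1%N nt) x k = W x 1%N k.+2 - W x 1%N k.+1 - W x 0%N k.+2 + W x 0%N k.+1.
Proof.
elim: n x k => [|n IH] x k; first by case: k.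
case: n IH x k => [|m] IH x k.
  by rewrite eta_1 ffunE cob2; case: k => -[].
rewrite eta_SS ffunE; case: ifP => hk0.
  by rewrite cob2 !W_front2 // (eqP hk0).
have hk : (k.-1 < m.+1)%N by have := ltn_ord k; lia.
rewrite gatB !(gatO _ hk) !IH !W_face //.
have -> : k.-1.+1 = k by lia.
rewrite (@bump_lt 1 0) // !(@bump_ge 1) //; try lia.
by rewrite (@bump_ge 0) // alg2.
Qed.

Lemma tau_face0 n (x : X n.+1) :
  tau (face 0 x) = nface 0 (tau x) + Defs.eta (@cobound H X 1%N nt) x.
Proof.
apply/ffunP => k; rewrite !ffunE eta_cob !W_face // !(@bump_ge 0) //.
rewrite ltn0.
have -> : (k.+1 == 0)%N = false by [].
rewrite gat_tau; last by have := ltn_ord k; lia.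
by rewrite alg1.
Qed.

End Comb.

Section Sums.
Variable R : realType.

Lemma fiber0 (A B : choiceType) (f : A -> B) (p : A -> R) (x : B) :
  (forall a, 0 <= p a) -> finite_set (p @^-1` [set~ 0]) -> push f p = dirac R x ->
  forall a, f a != x -> p a = 0.
Proof.
move=> p0 fin hp a ha.
have := congr1 (fun h => h (f a)) hp; rewrite /push /dirac (negbTE ha) => hs.
case: (eqVneq (p a) 0) => // hpa.
rewrite fsbig_supp in hs.
apply: (pfsumr_eq0 _ _ hs).
- by apply: sub_finite_set fin => y [].
- by move=> y _; apply: p0.
- by split => //=; apply/eqP.
Qed.

Lemma transfer (A B A' B' : choiceType) (f : A -> B) (f' : A' -> B')
  (PsA : A -> A') (PsB : B -> B') (PA : pred A) (PA' : set A') (PB : pred B)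
  (q : A' -> R) (inv : A' -> A) :
  (forall a, PA a -> PA' (PsA a)) -> (forall a', PA' a' -> PA (inv a')) ->
  (forall a, PA a -> inv (PsA a) = a) -> (forall a', PA' a' -> PsA (inv a') = a') ->
  (forall a, PA a -> PsB (f a) = f' (PsA a)) -> (forall a, PA a -> PB (f a)) ->
  (forall b b', PB b -> PB b' -> PsB b = PsB b' -> b = b') ->
  (forall a', ~ PA' a' -> q a' = 0) ->
  forall b, push f (fun a => if PA a then q (PsA a) else 0) b =
            if PB b then push f' q (PsB b) else 0.
Proof.
move=> h1 h2 h3 h4 h5 h6 h7 h8 b; rewrite /push.
have -> : \sum_(a \in f @^-1` [set b]) (if PA a then q (PsA a) else 0) =
          \sum_(a \in f @^-1` [set b] `&` [set a | PA a]) q (PsA a).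
  rewrite fsbig_mkcondr; apply: eq_fsbigr => a _.
  by case: (boolP (PA a)) => ha; [rewrite mem_set | rewrite memNset //= (negbTE ha)].
case: (boolP (PB b)) => hb; last first.
  apply: fsbig1 => a [/= fab pa]; exfalso.
  by move: (h6 _ pa); rewrite fab (negbTE hb).
rewrite -(reindex_fsbig PsA _ (f' @^-1` [set PsB b] `&` PA')); last first.
  split.
  - by move=> a [/= fab pa]; split; [rewrite /= -h5 // fab | exact: h1].
  - move=> a1 a2 /set_mem [_ p1] /set_mem [_ p2] e.
    by rewrite -(h3 _ p1) -(h3 _ p2) e.
  - move=> a' [/= fa' pa']; exists (inv a'); last exact: h4.
    split => //=; last exact: h2.
    apply: h7; [exact: h6 (h2 _ pa') | exact: hb |].
    by rewrite h5 ?h4 // h2.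
apply: fsbig_widen => [a' [] //|a' [fa' npa']].
by rewrite /= h8 //; move=> pa'; apply: npa'.
Qed.

Lemma pull_distr (A A' : choiceType) (PsA : A -> A') (PA : pred A) (PA' : set A')
  (q : A' -> R) (inv : A' -> A) :
  (forall a, PA a -> PA' (PsA a)) -> (forall a', PA' a' -> PA (inv a')) ->
  (forall a, PA a -> inv (PsA a) = a) -> (forall a', PA' a' -> PsA (inv a') = a') ->
  (forall a', ~ PA' a' -> q a' = 0) -> is_distr q ->
  is_distr (fun a => if PA a then q (PsA a) else 0).
Proof.
move=> h1 h2 h3 h4 h8 [q0 qfin qsum]; split.
- by move=> a; case: ifP.
- apply: sub_finite_set (finite_image inv qfin) => a /=.
  case: ifP => // pa qa; exists (PsA a) => //; exact: h3.
- rewrite -qsum.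
  have -> : \sum_(a \in [set: A]) (if PA a then q (PsA a) else 0) =
            \sum_(a \in [set: A] `&` [set a | PA a]) q (PsA a).
    rewrite fsbig_mkcondr; apply: eq_fsbigr => a _.
    by case: (boolP (PA a)) => ha; [rewrite mem_set | rewrite memNset //= (negbTE ha)].
  rewrite -(reindex_fsbig PsA _ PA'); last first.
    split.
    - by move=> a [_ pa]; exact: h1.
    - move=> a1 a2 /set_mem [_ p1] /set_mem [_ p2] e.
      by rewrite -(h3 _ p1) -(h3 _ p2) e.
    - by move=> a' pa'; exists (inv a'); [split => //; exact: h2 | exact: h4].
  apply: fsbig_widen => // a' [_ npa'].
  by rewrite /= h8.
Qed.

Lemma push_dirac (A B : choiceType) (f : A -> B) (a : A) :
  push f (dirac R a) = dirac R (f a).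
Proof.
apply/funext => b; rewrite /push /dirac.
case: (eqVneq b (f a)) => [-> | hb].
  rewrite -(fsbig_widen [set a]) ?fsbig_set1 ?eqxx //.
    by move=> x ->.
  by move=> x [_ /= xa]; case: eqP.
apply: fsbig1 => s /= fs; case: eqP => // sa.
by move: hb; rewrite -fs sa eqxx.
Qed.

Lemma dirac_distr (A : choiceType) (a : A) : is_distr (dirac R a).
Proof.
split.
- by move=> s; rewrite /dirac; case: ifP.
- apply: sub_finite_set (finite_set1 a) => s /=; rewrite /dirac.
  by case: eqP.
- rewrite -(fsbig_widen [set a]) ?fsbig_set1 /dirac ?eqxx //.
  by move=> x [_ /= xa]; case: eqP.
Qed.

End Sums.
Arguments transfer {R A B A' B' f f' PsA PsB PA PA' PB q inv}.
Arguments pull_distr {R A A' PsA PA PA' q inv}.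


Section Quot.
Variables (X : ssdata) (Z : forall n, pred (X n)).
Hypothesis hZ : is_subcomplex Z.

Lemma qprojIn n (x : X n) : x \in Z n -> qproj Z x = None.
Proof. by move=> h; rewrite /qproj insubF // h. Qed.
Lemma qprojOut n (x : X n) (h : x \notin Z n) : qproj Z x = Some (exist _ x h).
Proof. by rewrite /qproj insubT. Qed.
Lemma qproj_val n (x : {x : X n | x \notin Z n}) : qproj Z (val x) = Some x.
Proof. exact: valK. Qed.

Lemma qproj_face n (x : X n.+1) i : (i <= n.+1)%N -> qproj Z (face i x) = face i (qproj Z x).
Proof.
move=> hi; case: (boolP (x \in Z n.+1)) => hx.
  by rewrite qprojIn ?qprojIn //; apply: (proj1 hZ).
by rewrite (@qprojOut _ _ hx).
Qed.

Lemma qproj_degen n (x : X n) j : (j <= n)%N -> qproj Z (degen j x) = degen j (qproj Z x).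
Proof.
move=> hj; case: (boolP (x \in Z n)) => hx.
  by rewrite qprojIn ?qprojIn //; apply: (proj2 hZ).
by rewrite (@qprojOut _ _ hx).
Qed.

Lemma qproj_front2 n (x : X n.+2) : qproj Z (front2 x) = front2 (qproj Z x).
Proof.
elim: n x => [//|n IH] x.
by rewrite [front2 x]/= IH qproj_face.
Qed.

Lemma front2_None n : front2 (None : quot Z n.+2) = None.
Proof. by elim: n => [//|n IH]. Qed.

Variable H : zmodType.

Lemma eta_qproj (beta : quot Z 2%N -> H) n (x : X n.+1) :
  Defs.eta beta (qproj Z x) = Defs.eta (fun y => beta (qproj Z y)) x.
Proof.
elim: n x => [|n IH] x; first exact: ffun0_eq.
case: n IH x => [|m] IH x; first by apply/ffunP => k; rewrite !ffunE.
apply/ffunP => k; rewrite !eta_SS !ffunE qproj_front2; case: ifP => // _.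
by rewrite -!qproj_face // !IH.
Qed.

Lemma eta_None (beta : quot Z 2%N -> H) : beta None = 0 ->
  forall n, Defs.eta beta (None : quot Z n.+1) = 0.
Proof.
move=> b0 n; elim: n => [|n IH]; first exact: ffun0_eq.
case: n IH => [|m] IH; first by apply/ffunP => k; rewrite !ffunE b0.
apply/ffunP => k; rewrite !eta_SS !ffunE front2_None b0; case: ifP => // _.
have e1 : @face (quot Z) _ 1 None = None := erefl.
have e0 : @face (quot Z) _ 0 None = None := erefl.
by rewrite e1 e0 IH subrr gat0.
Qed.
End Quot.

Lemma alg3 (H : zmodType) (a A t B : H) : a + A - (t + (A - B)) = a - t + B.
Proof. by rewrite opprD opprB addrACA [A + _]addrC subrK. Qed.

Section Main.
Variables (R : realType) (H : zmodType) (X : ssdata) (Z : forall n, pred (X n))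
  (alpha : X 2%N -> H) (nu : X 1%N -> H) (beta : quot Z 2%N -> H).
Hypothesis hX : is_sSet X.
Hypothesis hZ : is_subcomplex Z.
Hypothesis nu0 : forall z : X 0%N, z \in Z 0%N -> nu (@degen X 0%N 0 z) = 0.
Hypothesis bnorm : @normalized H (quot Z) 1%N beta.
Hypothesis hb : forall x : X 2%N, beta (qproj Z x) = alpha x - @cobound H X 1%N (nutilde Z nu) x.

Notation tauX := (@tau H X Z nu).
Notation EX := (twisted alpha).
Notation EQ := (twisted beta).

Definition Psi n (e : tlev H X n) : tlev H (quot Z) n := (e.1 - tauX n e.2, qproj Z e.2).
Definition Phi n (x : X n) (e : tlev H (quot Z) n) : tlev H X n := (e.1 + tauX n x, x).
Arguments Psi {n}. Arguments Phi {n}.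

Lemma beta_None : beta None = 0.
Proof. exact: (bnorm 0%N (None : quot Z 1%N) isT). Qed.

Lemma etaNone n : Defs.eta beta (None : quot Z n.+1) = 0.
Proof. exact: eta_None beta_None n. Qed.

Lemma PhiPsi n x (e : tlev H X n) : e.2 = x -> Phi x (Psi e) = e.
Proof. by case: e => g y /= ->; rewrite /Phi /Psi /= subrK. Qed.

Lemma PsiPhi n x (e : tlev H (quot Z) n) : e.2 = qproj Z x -> Psi (Phi x e) = e.
Proof. by case: e => g y /= ->; rewrite /Phi /Psi /= addrK. Qed.
Arguments PhiPsi {n x e}. Arguments PsiPhi {n x e}.

Lemma Psi_face n i (e : tlev H X n.+1) : (i <= n.+1)%N ->
  Psi (@face EX n i e) = @face EQ n i (Psi e).
Proof.
case: e => g x hi; rewrite /Psi /= /tface /=.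
congr (_, _); last exact: qproj_face.
case: (eqVneq i 0%N) => [-> | i0].
  rewrite tau_face0 // nfaceB eta_qproj //.
  have hc : Defs.eta (@cobound H X 1%N (nutilde Z nu)) x =
            Defs.eta alpha x - Defs.eta (fun y => beta (qproj Z y)) x.
    rewrite -etaB; congr (Defs.eta _ x); apply/funext => y.
    by rewrite hb opprB addrC subrK.
  by rewrite hc alg3.
rewrite tau_face ?nfaceB //.
by apply/andP; split => //; rewrite lt0n.
Qed.

Lemma Psi_degen n j (e : tlev H X n) : (j <= n)%N ->
  Psi (@degen EX n j e) = @degen EQ n j (Psi e).
Proof.
case: e => g x hj; rewrite /Psi /= /tdegen /=.
by rewrite qproj_degen // tau_degen // ndegenB.
Qed.


Lemma Psi_inj n (e e' : tlev H X n) : e.2 = e'.2 -> Psi e = Psi e' -> e = e'.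
Proof. by move=> h hP; rewrite -(@PhiPsi _ e.2 e erefl) hP PhiPsi. Qed.

Lemma faceEQ0 n i : @face EQ n i (0, None) = (0, None).
Proof.
rewrite /= /tface /=; case: ifP => _; last by rewrite nface0.
by rewrite nface0 etaNone addr0.
Qed.

Lemma degenEQ0 n j : @degen EQ n j (0, None) = (0, None).
Proof. by rewrite /= /tdegen /= ndegen0. Qed.

Lemma Psi_Z n (z : X n) : z \in Z n -> Psi (tauX n z, z) = (0, None).
Proof. by move=> hz; rewrite /Psi /= subrr qprojIn. Qed.

Lemma tau_Zsection : is_Zsection alpha Z (fun n x => tauX n x).
Proof.
split.
- move=> n i z hi hz.
  apply: Psi_inj => //.
  rewrite Psi_face // Psi_Z // faceEQ0 Psi_Z //.
  exact: (proj1 hZ).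
- move=> n j z hj hz.
  apply: Psi_inj => //.
  rewrite Psi_degen // Psi_Z // degenEQ0 Psi_Z //.
  exact: (proj2 hZ).
Qed.

Lemma nface_det m (g : {ffun 'I_m.+2 -> H}) :
  nface 0 g = 0 -> nface m.+2 g = 0 -> g = 0.
Proof.
move=> h0 h2; apply/ffunP => k; rewrite [RHS]ffunE.
case: (ltnP k m.+1) => hk.
  move: h2 => /(congr1 (fun h : {ffun 'I_m.+1 -> H} => h (Ordinal hk))); rewrite !ffunE.
  have -> : ((Ordinal hk).+1 < m.+2)%N by [].
  by rewrite -(gatE g k).
have hm : (m < m.+1)%N by [].
move: h0 => /(congr1 (fun h : {ffun 'I_m.+1 -> H} => h (Ordinal hm))); rewrite !ffunE ltn0.
have -> : ((Ordinal hm).+1 == 0)%N = false by [].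
have -> : k = Ordinal (ltnSn m.+1) by apply/val_inj => /=; have := ltn_ord k; lia.
by rewrite -gatE.
Qed.

Lemma sec_unique (sigma : forall n, X n -> {ffun 'I_n -> H}) :
  is_Zsection alpha Z sigma ->
  (forall z : X 1%N, z \in Z 1%N -> sigma 1%N z = [ffun _ => nu z]) ->
  forall n z, z \in Z n -> sigma n z = tauX n z.
Proof.
move=> [sf sd] s1.
have rel n i (z : X n.+1) : (i <= n.+1)%N -> z \in Z n.+1 ->
    nface i (sigma n.+1 z - tauX n.+1 z) = sigma n (face i z) - tauX n (face i z).
  move=> hi hz.
  have := congr1 Psi (sf n i z hi hz); rewrite Psi_face //.
  rewrite /Psi /= qprojIn //= /tface /=.
  rewrite etaNone addr0 => /(congr1 fst) /= <-.
  by case: ifP => // /eqP ->.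
elim=> [|n IH] z hz; first exact: ffun0_eq.
case: n IH z hz => [|m] IH z hz.
  by rewrite s1 // tau1; apply/ffunP => k; rewrite !ffunE /nutilde hz.
apply/eqP; rewrite -subr_eq0; apply/eqP; apply: nface_det.
  by rewrite rel // IH ?subrr //; apply: (proj1 hZ).
by rewrite rel // IH ?subrr //; apply: (proj1 hZ).
Qed.


Lemma fib (E Y : ssdata) (pi : forall n, E n -> Y n) (p : dfam R E Y) :
  is_distr_on pi p -> forall n y a, pi n a != y -> p n y a = 0.
Proof.
move=> [hd _ _ hpr] n y a hne.
by have [h0 hf _] := hd n y; exact: (@fiber0 R _ _ _ _ _ h0 hf (hpr n y) a hne).
Qed.
Arguments fib {E Y pi p}.

Lemma qNone {q : dfam R EQ (quot Z)} : @sDist R H (quot Z) beta q ->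
  forall n, q n None = dirac R ((0, None) : EQ n).
Proof.
move=> hq; have [hd _ hdeg _] := hq.
elim=> [|n IH].
  have [_ _ hs] := hd 0%N None.
  have key : forall a : EQ 0%N, a != (0, None) -> q 0%N None a = 0.
    case=> g o ha; apply: (fib hq) => /=; apply: contra ha => /eqP -> /=.
    by rewrite (ffun0_eq g 0).
  apply/funext => a; rewrite /dirac; case: eqP => [-> | /eqP ha]; last exact: key.
  rewrite -hs -(fsbig_widen [set ((0, None) : EQ 0%N)]) ?fsbig_set1 //.
  by move=> b [_ /= /eqP hb0]; apply: key.
have -> : (None : quot Z n.+1) = @degen (quot Z) n 0 None by [].
by rewrite -hdeg // IH push_dirac degenEQ0.
Qed.

Definition Fm (q : dfam R EQ (quot Z)) : dfam R EX X :=
  fun n x e => if e.2 == x then q n (qproj Z x) (Psi e) else 0.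

Definition Gm (p : dfam R EX X) : dfam R EQ (quot Z) :=
  fun n o e => if o is Some x' then (if e.2 == Some x' then p n (val x') (Phi (val x') e) else 0)
               else dirac R ((0, None) : EQ n) e.

Lemma p_in {p : dfam R EX X} : @sDist_rel R H X alpha Z nu p ->
  forall n x, x \in Z n -> p n x = dirac R ((tauX n x, x) : EX n).
Proof.
move=> [_ hr] n x hx; apply: (hr (fun n x => tauX n x) tau_Zsection) => // z hz.
by rewrite tau1; apply/ffunP => k; rewrite !ffunE /nutilde hz.
Qed.

Lemma G_pull {p : dfam R EX X} : @sDist_rel R H X alpha Z nu p ->
  forall n x e, Gm p n (qproj Z x) e = if e.2 == qproj Z x then p n x (Phi x e) else 0.
Proof.
move=> hp n x e; case: (boolP (x \in Z n)) => hx; last by rewrite (@qprojOut _ _ _ _ hx).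
rewrite qprojIn // (p_in hp) //= /dirac; case: e => g o /=.
rewrite /Phi /= !xpair_eqE eqxx andbT.
case: o => [o'|]; first by rewrite andbF.
rewrite andbT eqxx; case: (eqVneq g 0) => [-> | gn]; first by rewrite add0r eqxx.
case: eqP => // h; case/eqP: gn.
by move: (congr1 (fun t => t - tauX n x) h); rewrite addrK subrr.
Qed.

Lemma G_pullf {p : dfam R EX X} : @sDist_rel R H X alpha Z nu p ->
  forall n x, Gm p n (qproj Z x) =
    (fun e => if (fun e : EQ n => e.2 == qproj Z x) e then p n x (Phi x e) else 0).
Proof. by move=> hp n x; apply/funext => e; rewrite G_pull. Qed.

Lemma qcase {n} (o : quot Z n) : o = None \/ exists x, o = qproj Z x.
Proof. by case: o => [x|]; [right; exists (val x); rewrite qproj_val | left]. Qed.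


Lemma G_push {p : dfam R EX X} : @sDist_rel R H X alpha Z nu p ->
  forall m m' (fX : X m -> X m') (fEX : EX m -> EX m') (fEQ : EQ m -> EQ m') (x : X m),
  (forall e, (fEX e).2 = fX e.2) ->
  (forall a : EQ m, a.2 = qproj Z x -> (fEQ a).2 = qproj Z (fX x)) ->
  (forall e, Psi (fEX e) = fEQ (Psi e)) ->
  push fEX (p m x) = p m' (fX x) ->
  push fEQ (Gm p m (qproj Z x)) = Gm p m' (qproj Z (fX x)).
Proof.
move=> hp m m' fX fEX fEQ x h1 h2 h3 h4.
rewrite (G_pullf hp) (G_pullf hp); apply/funext => b.
have a1 : forall a : EQ m, (fun e : EQ m => e.2 == qproj Z x) a -> [set a : EX m | a.2 = x] (Phi x a) by [].
have a2 : forall a' : EX m, [set a : EX m | a.2 = x] a' -> (fun e : EQ m => e.2 == qproj Z x) (Psi a').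
  by move=> a' /= ->.
have a3 : forall a : EQ m, (fun e : EQ m => e.2 == qproj Z x) a -> Psi (Phi x a) = a.
  by move=> a /eqP; apply: PsiPhi.
have a4 : forall a' : EX m, [set a : EX m | a.2 = x] a' -> Phi x (Psi a') = a'.
  by move=> a'; apply: PhiPsi.
have a5 : forall a : EQ m, (fun e : EQ m => e.2 == qproj Z x) a -> Phi (fX x) (fEQ a) = fEX (Phi x a).
  move=> a /eqP ha; rewrite -{1}(PsiPhi ha) -h3 PhiPsi //.
have a6 : forall a : EQ m, (fun e : EQ m => e.2 == qproj Z x) a -> (fun b : EQ m' => b.2 == qproj Z (fX x)) (fEQ a).
  by move=> a /eqP ha /=; rewrite h2.
have a7 : forall b1 b2 : EQ m', (fun b : EQ m' => b.2 == qproj Z (fX x)) b1 ->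
     (fun b : EQ m' => b.2 == qproj Z (fX x)) b2 -> Phi (fX x) b1 = Phi (fX x) b2 -> b1 = b2.
  move=> [g1 o1] [g2 o2] /= /eqP -> /eqP -> [].
  by move/addIr => ->.
have a8 : forall a' : EX m, ~ [set a : EX m | a.2 = x] a' -> p m x a' = 0.
  by move=> a' ha; apply: (fib (proj1 hp)); apply/eqP.
rewrite (transfer a1 a2 a3 a4 a5 a6 a7 a8 b).
by rewrite h4.
Qed.

Lemma F_push {q : dfam R EQ (quot Z)} : @sDist R H (quot Z) beta q ->
  forall m m' (fX : X m -> X m') (fEX : EX m -> EX m') (fEQ : EQ m -> EQ m') (x : X m),
  (forall e, (fEX e).2 = fX e.2) ->
  (forall e, Psi (fEX e) = fEQ (Psi e)) ->
  push fEQ (q m (qproj Z x)) = q m' (qproj Z (fX x)) ->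
  push fEX (Fm q m x) = Fm q m' (fX x).
Proof.
move=> hq m m' fX fEX fEQ x h1 h3 h4; apply/funext => b.
have a1 : forall a : EX m, (fun e : EX m => e.2 == x) a -> [set a : EQ m | a.2 = qproj Z x] (Psi a).
  by move=> a /eqP /= ->.
have a2 : forall a' : EQ m, [set a : EQ m | a.2 = qproj Z x] a' -> (fun e : EX m => e.2 == x) (Phi x a').
  by move=> a' _ /=.
have a3 : forall a : EX m, (fun e : EX m => e.2 == x) a -> Phi x (Psi a) = a.
  by move=> a /eqP; apply: PhiPsi.
have a4 : forall a' : EQ m, [set a : EQ m | a.2 = qproj Z x] a' -> Psi (Phi x a') = a'.
  by move=> a'; apply: PsiPhi.
have a5 : forall a : EX m, (fun e : EX m => e.2 == x) a -> Psi (fEX a) = fEQ (Psi a).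
  by move=> a _; apply: h3.
have a6 : forall a : EX m, (fun e : EX m => e.2 == x) a -> (fun b : EX m' => b.2 == fX x) (fEX a).
  by move=> a /eqP ha /=; rewrite h1 ha.
have a7 : forall b1 b2 : EX m', (fun b : EX m' => b.2 == fX x) b1 ->
     (fun b : EX m' => b.2 == fX x) b2 -> Psi b1 = Psi b2 -> b1 = b2.
  by move=> b1 b2 /eqP e1 /eqP e2; apply: Psi_inj; rewrite e1 e2.
have a8 : forall a' : EQ m, ~ [set a : EQ m | a.2 = qproj Z x] a' -> q m (qproj Z x) a' = 0.
  by move=> a' ha; apply: (fib hq); apply/eqP.
rewrite /Fm (transfer a1 a2 a3 a4 a5 a6 a7 a8 b).
by rewrite h4.
Qed.


Lemma G_proj {p : dfam R EX X} : @sDist_rel R H X alpha Z nu p ->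
  forall n x, push (@tproj H (quot Z) beta n) (Gm p n (qproj Z x)) = dirac R (qproj Z x).
Proof.
move=> hp n x; rewrite (G_pullf hp); apply/funext => b.
have a1 : forall a : EQ n, (fun e : EQ n => e.2 == qproj Z x) a -> [set a : EX n | a.2 = x] (Phi x a) by [].
have a2 : forall a' : EX n, [set a : EX n | a.2 = x] a' -> (fun e : EQ n => e.2 == qproj Z x) (Psi a').
  by move=> a' /= ->.
have a3 : forall a : EQ n, (fun e : EQ n => e.2 == qproj Z x) a -> Psi (Phi x a) = a.
  by move=> a /eqP; apply: PsiPhi.
have a4 : forall a' : EX n, [set a : EX n | a.2 = x] a' -> Phi x (Psi a') = a'.
  by move=> a'; apply: PhiPsi.
have a5 : forall a : EQ n, (fun e : EQ n => e.2 == qproj Z x) a ->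
   (fun _ : quot Z n => x) (@tproj H (quot Z) beta n a) = @tproj H X alpha n (Phi x a) by [].
have a6 : forall a : EQ n, (fun e : EQ n => e.2 == qproj Z x) a ->
   (fun o : quot Z n => o == qproj Z x) (@tproj H (quot Z) beta n a) by [].
have a7 : forall b1 b2 : quot Z n, (fun o : quot Z n => o == qproj Z x) b1 ->
     (fun o : quot Z n => o == qproj Z x) b2 -> (fun _ : quot Z n => x) b1 = (fun _ : quot Z n => x) b2 -> b1 = b2.
  by move=> b1 b2 /eqP -> /eqP ->.
have a8 : forall a' : EX n, ~ [set a : EX n | a.2 = x] a' -> p n x a' = 0.
  by move=> a' ha; apply: (fib (proj1 hp)); apply/eqP.
rewrite (transfer a1 a2 a3 a4 a5 a6 a7 a8 b) /=.
have [_ _ _ hpr] := proj1 hp.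
by rewrite hpr /dirac eqxx.
Qed.

Lemma F_proj {q : dfam R EQ (quot Z)} : @sDist R H (quot Z) beta q ->
  forall n x, push (@tproj H X alpha n) (Fm q n x) = dirac R x.
Proof.
move=> hq n x; apply/funext => b.
have a1 : forall a : EX n, (fun e : EX n => e.2 == x) a -> [set a : EQ n | a.2 = qproj Z x] (Psi a).
  by move=> a /eqP /= ->.
have a2 : forall a' : EQ n, [set a : EQ n | a.2 = qproj Z x] a' -> (fun e : EX n => e.2 == x) (Phi x a').
  by move=> a' _ /=.
have a3 : forall a : EX n, (fun e : EX n => e.2 == x) a -> Phi x (Psi a) = a.
  by move=> a /eqP; apply: PhiPsi.
have a4 : forall a' : EQ n, [set a : EQ n | a.2 = qproj Z x] a' -> Psi (Phi x a') = a'.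
  by move=> a'; apply: PsiPhi.
have a5 : forall a : EX n, (fun e : EX n => e.2 == x) a ->
   qproj Z (@tproj H X alpha n a) = @tproj H (quot Z) beta n (Psi a) by [].
have a6 : forall a : EX n, (fun e : EX n => e.2 == x) a ->
   (fun y : X n => y == x) (@tproj H X alpha n a) by [].
have a7 : forall b1 b2 : X n, (fun y : X n => y == x) b1 ->
     (fun y : X n => y == x) b2 -> qproj Z b1 = qproj Z b2 -> b1 = b2.
  by move=> b1 b2 /eqP -> /eqP ->.
have a8 : forall a' : EQ n, ~ [set a : EQ n | a.2 = qproj Z x] a' -> q n (qproj Z x) a' = 0.
  by move=> a' ha; apply: (fib hq); apply/eqP.
rewrite /Fm (transfer a1 a2 a3 a4 a5 a6 a7 a8 b) /=.
have [_ _ _ hpr] := hq.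
rewrite [in RHS]/dirac; case: eqP => [-> | //].
by rewrite hpr /dirac eqxx.
Qed.

Lemma G_sDist {p : dfam R EX X} : @sDist_rel R H X alpha Z nu p ->
  @sDist R H (quot Z) beta (Gm p).
Proof.
move=> hp; move: (hp) => [[hd hf hdg hpr] _]; split.
- move=> n o; case: (qcase o) => [-> | [x ->]]; first exact: dirac_distr.
  rewrite (G_pullf hp).
  apply: (pull_distr (PsA := Phi x) (PA := fun e : EQ n => e.2 == qproj Z x) (q := p n x) (PA' := [set a : EX n | a.2 = x]) (inv := Psi)) => //.
  + by move=> a' /= ->.
  + by move=> a /eqP; apply: PsiPhi.
  + by move=> a'; apply: PhiPsi.
  + by move=> a' ha; apply: (fib (proj1 hp)); apply/eqP.
  + exact: hd.
- move=> n i o hi; case: (qcase o) => [-> | [x ->]].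
    have -> : Gm p n.+1 None = dirac R ((0, None) : EQ n.+1) by [].
    by rewrite push_dirac faceEQ0.
  rewrite -qproj_face //; apply: (G_push hp _ _ (fun y : X n.+1 => face i y) (@face EX n i) (@face EQ n i) x) => //.
  + by move=> a ha; rewrite qproj_face // -ha.
  + by move=> e; apply: Psi_face.
  + exact: hf.
- move=> n j o hj; case: (qcase o) => [-> | [x ->]].
    have -> : Gm p n None = dirac R ((0, None) : EQ n) by [].
    by rewrite push_dirac degenEQ0.
  rewrite -qproj_degen //; apply: (G_push hp _ _ (fun y : X n => degen j y) (@degen EX n j) (@degen EQ n j) x) => //.
  + by move=> a ha; rewrite qproj_degen // -ha.
  + by move=> e; apply: Psi_degen.
  + exact: hdg.
- move=> n o; case: (qcase o) => [-> | [x ->]]; last exact: G_proj.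
  have -> : Gm p n None = dirac R ((0, None) : EQ n) by [].
  by rewrite push_dirac.
Qed.

Lemma F_sDist {q : dfam R EQ (quot Z)} : @sDist R H (quot Z) beta q ->
  @sDist_rel R H X alpha Z nu (Fm q).
Proof.
move=> hq; have [hd hf hdg hpr] := hq; split; first split.
- move=> n x; rewrite /Fm.
  apply: (pull_distr (PsA := Psi) (PA := fun e : EX n => e.2 == x) (q := q n (qproj Z x)) (PA' := [set a : EQ n | a.2 = qproj Z x]) (inv := Phi x)) => //.
  + by move=> a /eqP /= ->.
  + by move=> a /eqP; apply: PhiPsi.
  + by move=> a'; apply: PsiPhi.
  + by move=> a' ha; apply: (fib hq); apply/eqP.
  + exact: hd.
- move=> n i x hi; apply: (F_push hq _ _ (fun y : X n.+1 => face i y) (@face EX n i) (@face EQ n i) x) => //.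
  + by move=> e; apply: Psi_face.
  + by rewrite hf // qproj_face.
- move=> n j x hj; apply: (F_push hq _ _ (fun y : X n => degen j y) (@degen EX n j) (@degen EQ n j) x) => //.
  + by move=> e; apply: Psi_degen.
  + by rewrite hdg // qproj_degen.
- by move=> n x; apply: F_proj.
- move=> sigma hs hs1 n z hz; rewrite (sec_unique _ hs hs1 _ _ hz).
  apply/funext => -[g y]; rewrite /Fm /= /dirac.
  case: (eqVneq y z) => [-> | hyz].
    rewrite /Psi /= qprojIn // (qNone hq) /dirac !xpair_eqE !eqxx !andbT subr_eq0.
    by case: ifP.
  by rewrite xpair_eqE (negbTE hyz) andbF.
Qed.

Lemma main_iso : convex_iso (@sDist R H (quot Z) beta) (@sDist_rel R H X alpha Z nu).
Proof.
exists Fm, Gm; split.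
- by move=> q hq; apply: F_sDist.
- by move=> p hp; apply: G_sDist.
- move=> q hq; apply: functional_extensionality_dep => n.
  apply/funext => o; apply/funext => e.
  case: (qcase o) => [-> | [x ->]].
    by rewrite (qNone hq).
  rewrite (G_pull (F_sDist hq)) /Fm /= eqxx.
  case: (eqVneq e.2 (qproj Z x)) => [he | he]; first by rewrite PsiPhi.
  by rewrite (fib hq).
- move=> p hp; apply: functional_extensionality_dep => n.
  apply/funext => x; apply/funext => e.
  rewrite /Fm (G_pull hp) /=.
  case: (eqVneq e.2 x) => [he | he]; first by rewrite he eqxx PhiPsi.
  by rewrite (fib (proj1 hp)).
- move=> t q q' _ _ _; apply: functional_extensionality_dep => n.
  apply/funext => x; apply/funext => e.
  by rewrite /Fm /dmix; case: ifP => _; rewrite ?mulr0 ?addr0.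
Qed.

End Main.

Theorem mainTheorem3 (R : realType) (H : zmodType) (X : ssdata)
  (Z : forall n, pred (X n)) (alpha : X 2%N -> H) (nu : X 1%N -> H)
  (beta : quot Z 2%N -> H) :
  is_sSet X -> is_subcomplex Z ->
  (* alpha : normalized 2-cocycle on X *)
  @normalized H X 1%N alpha -> @cocycle H X 2%N alpha ->
  (* nu : normalized 1-cochain on Z with  d nu = i^* alpha *)
  (forall z : X 0%N, z \in Z 0%N -> nu (@degen X 0%N 0 z) = 0) ->
  (forall z : X 2%N, z \in Z 2%N -> @cobound H X 1%N nu z = alpha z) ->
  (* beta : normalized 2-cocycle on X/Z with  j^* beta = alpha - d nu~ *)
  @normalized H (quot Z) 1%N beta -> @cocycle H (quot Z) 2%N beta ->
  (forall x : X 2%N, beta (qproj Z x) = alpha x - @cobound H X 1%N (nutilde Z nu) x) ->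
  convex_iso (@sDist R H (quot Z) beta) (@sDist_rel R H X alpha Z nu).
Proof.
move=> hX hZ _ _ nu0 _ bn _ hb.
exact: main_iso.
Qed.
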